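(* Let $G$ be a finite simple graph with edge weight function $w$ and vertex weight function $w_1$, let $u$ be a vertex of $G$, and let $T=T(G,u)$ be the weighted path-tree of $G$ with respect to $u$. Then $$\frac{\eta_{(w,w_1)}(G\setminus u,x)}{\eta_{(w,w_1)}(G,x)}=\frac{\eta_{(w,w_1)}(T\setminus u,x)}{\eta_{(w,w_1)}(T,x)}.$$
   Context: An edge weight function $w$ assigns a nonzero complex number to each edge; a vertex weight function $w_1$ assigns a real number (possibly $0$) to each vertex; subgraphs carry restricted weights; $G\setminus u$ deletes $u$ and its incident edges. For $A\subseteq E(G)$, $w(A)=\prod_{e\in A}w(e)$. $\mu_w(G,x)=\sum_{M}(-1)^{|M|}|w(M)|^2x^{n-2|M|}$ over all matchings $M$ (including empty). $\eta_{(w,w_1)}(G,x)=\sum_{S\subseteq V(G)}(-1)^{|V(G)\setminus S|}\big(\prod_{v\in V(G)\setminus S}w_1(v)\big)\mu_w(G[S],x)$ with $G[S]$ the induced subgraph; $\mu_w,\eta$ of the empty graph equal $1$. The path-tree $T(G,u)$ has as vertices the paths in $G$ starting at $u$ (the trivial path $u$ included, and denoted $u$); two such paths are adjacent iff one is obtained from the other by appending one vertex, i.e. $p'=p\,y$ where $y$ is adjacent in $G$ to the last vertex $z$ of $p$; this edge gets weight $w(e_{zy})$. The vertex $u$ of $T$ gets weight $w_1(u)$, and a path of length at least $1$ gets weight $w_1$ of its endpoint other than $u$. *)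

(* Defs.v *)
From HB Require Import structures.
From mathcomp Require Import all_boot all_order all_algebra.
From mathcomp Require Import complex.
Set Implicit Arguments. Unset Strict Implicit. Unset Printing Implicit Defensive.
Import Order.TTheory GRing.Theory Num.Theory.
Local Open Scope ring_scope.

Section WeightedGraph.
Variables (R : rcfType) (T : finType).

Definition simple_graph (E : {set {set T}}) : Prop :=
  forall f, f \in E -> #|f| = 2%N.

Definition sqnorm (z : R[i]) : R := (ComplexField.Normc.normc z) ^+ 2.

Definition matching_in (E : {set {set T}}) (S : {set T}) (M : {set {set T}}) : bool :=
  [&& M \subset E, [forall f in M, f \subset S] & trivIset M].

Definition mu_w (w : {set T} -> R[i]) (E : {set {set T}}) (S : {set T}) : {poly R} :=
  \sum_(M : {set {set T}} | matching_in E S M)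
     ((-1) ^+ #|M| * \prod_(f in M) sqnorm (w f)) *: 'X^(#|S| - 2 * #|M|).

Definition eta_w (w : {set T} -> R[i]) (w1 : T -> R) (E : {set {set T}})
    (S : {set T}) : {poly R} :=
  \sum_(S' : {set T} | S' \subset S)
     ((-1) ^+ #|S :\: S'| * \prod_(v in S :\: S') w1 v) *: mu_w w E S'.

End WeightedGraph.

Section PathTree.
Variables (R : rcfType) (V : finType).

Fixpoint seqs_upto (n : nat) : seq (seq V) :=
  if n is n'.+1 then [::] :: [seq x :: s | x <- enum V, s <- seqs_upto n']
  else [:: [::]].

Definition adj (E : {set {set V}}) : rel V := fun x y => [set x; y] \in E.

Definition is_upath (E : {set {set V}}) (u : V) (p : seq V) : bool :=
  if p is x :: s then [&& x == u, path (adj E) x s & uniq p] else false.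

Definition upaths (E : {set {set V}}) (u : V) : seq (seq V) :=
  undup [seq p <- seqs_upto #|V| | is_upath E u p].

Lemma seqs_upto_complete n (p : seq V) : (size p <= n)%N -> p \in seqs_upto n.
Proof.
elim: n p => [|n IH] [|x s] //= Hs.
rewrite in_cons /=; apply/allpairsP; exists (x, s) => /=.
by rewrite mem_enum IH.
Qed.

Lemma upaths_complete E u p : is_upath E u p -> p \in upaths E u.
Proof.
move=> Hp; rewrite mem_undup mem_filter Hp seqs_upto_complete //.
case: p Hp => [//|x s] /and3P [_ _ Hu]; by rewrite -(card_uniqP Hu) max_card.
Qed.

Definition ptree_vertex (E : {set {set V}}) (u : V) := seq_sub (upaths E u).

Variables (E : {set {set V}}) (u : V).
Local Notation VT := (ptree_vertex E u).

Definition endpt (p : VT) : V := last u (val p).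

Definition ptree_edges : {set {set VT}} :=
  [set f : {set VT} | [exists p : VT, exists q : VT,
      (f == [set p; q]) && (val q == rcons (val p) (endpt q))]].

(* the edge {p, p y} with z the last vertex of p gets weight w(e_{zy});
   {z, y} is exactly the image of {p, p y} under endpt *)
Definition ptree_w (w : {set V} -> R[i]) (f : {set VT}) : R[i] := w (endpt @: f).

Definition ptree_w1 (w1 : V -> R) (p : VT) : R := w1 (endpt p).

Definition ptree_minus_root : {set VT} := [set p : VT | val p != [:: u]].

End PathTree.

Arguments endpt {V} E u p.
Arguments ptree_w {R V} E u w f.
Arguments ptree_w1 {R V} E u w1 p.
Arguments ptree_edges {V} E u.
Arguments ptree_minus_root {V} E u.

(* Main.v *)
Require Import Defs.
From HB Require Import structures.
From mathcomp Require Import all_boot all_order all_algebra.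
From mathcomp Require Import complex.
From mathcomp Require Import ring.
From mathcomp Require Import zify.
Set Implicit Arguments. Unset Strict Implicit. Unset Printing Implicit Defensive.
Import GRing.Theory Num.Theory.
Local Open Scope ring_scope.

Section Expand.
Variables (R : comRingType) (T : finType) (a : T -> R).

Lemma prod_expand (U : {set T}) :
  \prod_(v in U) ('X - (a v)%:P) =
  \sum_(A : {set T} | A \subset U)
     ((-1) ^+ #|U :\: A| * \prod_(v in U :\: A) a v) *: 'X^#|A|.
Proof.
move: {2}#|U| (erefl #|U|) => n; elim: n U => [|n IH] U cU.
  move/eqP: cU; rewrite cards_eq0 => /eqP ->.
  rewrite big_set0 (big_pred1 set0); last first.
    by move=> A; rewrite subset0.
  by rewrite setD0 cards0 big_set0 mulr1 expr0 scale1r.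
have [x xU]: exists x, x \in U.
  by apply/set0Pn; rewrite -card_gt0 cU.
have cU' : #|U :\ x| = n by move: cU; rewrite (cardsD1 x) xU => -[].
rewrite (big_setD1 x) //= IH // [in RHS](bigID (fun A : {set T} => x \in A)) /=.
rewrite mulrBl !mulr_sumr ; congr (_ + _).
  have -> : \sum_(i : {set T} | (i \subset U) && (x \in i))
     ((-1) ^+ #|U :\: i| * \prod_(v in U :\: i) a v) *: 'X^#|i| =
     \sum_(i : {set T} | i \subset U :\ x)
     ((-1) ^+ #|U :\: (x |: i)| * \prod_(v in U :\: (x |: i)) a v) *: 'X^#|x |: i|.
    rewrite (reindex_onto (fun A => x |: A) (fun A => A :\ x)) /=; last first.
      by move=> A /andP[_ xA]; rewrite setD1K.
    apply: eq_bigl => A; rewrite setU11 andbT.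
    apply/andP/idP => [[sU /eqP <-]|sA].
      by apply: setSD.
    have xA : x \notin A by apply/negP => /(subsetP sA); rewrite !inE eqxx.
    split; last by rewrite setU1K.
    by rewrite subUset sub1set xU (subset_trans sA) // subsetDl.
  apply: eq_bigr => A sA.
  have xA : x \notin A by apply/negP => /(subsetP sA); rewrite !inE eqxx.
  have -> : U :\: (x |: A) = (U :\ x) :\: A.
    by apply/setP => y; rewrite !inE; case: (y == x); case: (y \in A); case: (y \in U).
  rewrite cardsU1 xA exprS.
by rewrite scalerAr.
rewrite -sumrN; apply: eq_big => A.
  by rewrite subsetD1.
move=> sA.
have xA : x \notin A by move: sA; rewrite subsetD1 => /andP[].
have -> : U :\: A = x |: ((U :\ x) :\: A).
  apply/setP => y; rewrite !inE; case: eqP => [->|] //=.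
  by rewrite xA xU.
rewrite cardsU1 big_setU1 ?inE ?eqxx //=.
rewrite andbF /= add1n exprS mul_polyC scalerA -scaleNr; congr (_ *: _).
ring.
all: by rewrite andbF.
Qed.
End Expand.

Section Gen.
Variables (R : rcfType) (T : finType) (E : {set {set T}}) (w : {set T} -> R[i]) (w1 : T -> R).
Hypothesis sE : simple_graph E.

Definition mw (M : {set {set T}}) : R := (-1) ^+ #|M| * \prod_(f in M) sqnorm (w f).
Definition UP (S : {set T}) : {poly R} := \prod_(v in S) ('X - (w1 v)%:P).

Lemma matchingE (S : {set T}) (M : {set {set T}}) :
  matching_in E S M = [&& M \subset E, cover M \subset S & trivIset M].
Proof.
rewrite /matching_in /cover; congr [&& _, _ & _].
by apply/forall_inP/bigcupsP.
Qed.

Lemma card_cover (M : {set {set T}}) : M \subset E -> trivIset M -> #|cover M| = (2 * #|M|)%N.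
Proof.
move=> sME /eqP <-.
rewrite (eq_bigr (fun _ => 2%N)); first by rewrite sum_nat_const mulnC.
move=> B BM; apply: sE; exact: (subsetP sME).
Qed.

Lemma eta_uncov (S : {set T}) :
  eta_w w w1 E S = \sum_(M | matching_in E S M) mw M *: UP (S :\: cover M).
Proof.
rewrite /eta_w /mu_w.
under eq_bigr => S' _ do rewrite scaler_sumr.
rewrite (exchange_big_dep (fun M => matching_in E S M)) /=; last first.
  move=> S' M sS'; rewrite !matchingE => /and3P[-> cS ->].
  by rewrite (subset_trans cS sS').
apply: eq_bigr => M mM.
move: (mM); rewrite matchingE => /and3P[sME cS tM].
set C := cover M.
rewrite /UP prod_expand scaler_sumr.
rewrite (reindex_onto (fun A => C :|: A) (fun S' => S' :\: C)) /=; last first.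
  move=> S' /andP[_]; rewrite matchingE => /and3P[_ cS' _].
  apply/setP => y; rewrite !inE; case: (boolP (y \in C)) => //= yC.
  by rewrite (subsetP cS' _ yC).
apply: eq_big => [A|A].
  rewrite matchingE sME tM subsetUl /= subUset cS /= !andbT.
  apply/andP/idP => [[sAS /eqP <-]|sA].
    apply/subsetP => y; rewrite !inE => /andP[yC /orP[yC'|yA]].
      by rewrite yC' in yC.
    by rewrite yC (subsetP sAS).
  split.
    by apply: subset_trans sA _; apply: subsetDl.
  apply/eqP; apply/setP => y; rewrite !inE.
  case: (boolP (y \in C)) => yC //=.
  apply/esym/negP => /(subsetP sA); by rewrite inE yC.
move=> /andP[/andP[sCAS _] /eqP eA].
have sA : A \subset S :\: C by rewrite -eA; exact: setSD sCAS.
have dA : [disjoint C & A].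
  rewrite -setI_eq0; apply/eqP/setP => y; rewrite !inE.
  by apply/negP => /andP[yC /(subsetP sA)]; rewrite inE yC.
have -> : S :\: (C :|: A) = (S :\: C) :\: A.
  by apply/setP => y; rewrite !inE; case: (y \in C); case: (y \in A).
rewrite cardsU (disjoint_setI0 dA) cards0 subn0 (card_cover sME tM).
by rewrite addKn !scalerA mulrC.
Qed.

Lemma edge_nsub2 (f A B : {set T}) : f \in E -> [disjoint A & B] -> f \subset A -> f \subset B -> False.
Proof.
move=> fE dAB fA fB.
have : (0 < #|f|)%N by rewrite (sE fE).
rewrite card_gt0 => /set0Pn[x xf].
by move: (disjointFr dAB (subsetP fA x xf)); rewrite (subsetP fB x xf).
Qed.

Lemma prodU (F : T -> {poly R}) (A B : {set T}) : [disjoint A & B] ->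
  \prod_(v in A :|: B) F v = (\prod_(v in A) F v) * \prod_(v in B) F v.
Proof.
move=> dAB; rewrite -bigU //; apply: eq_bigl => x; by rewrite !inE.
Qed.

Lemma prodU' (F : {set T} -> R) (A B : {set {set T}}) : [disjoint A & B] ->
  \prod_(v in A :|: B) F v = (\prod_(v in A) F v) * \prod_(v in B) F v.
Proof.
move=> dAB; rewrite -bigU //; apply: eq_bigl => x; by rewrite !inE.
Qed.

Definition splitM (A : {set T}) (M : {set {set T}}) := [set f in M | f \subset A].

Lemma eta_mul (S1 S2 : {set T}) : [disjoint S1 & S2] ->
  (forall f, f \in E -> f \subset S1 :|: S2 -> (f \subset S1) || (f \subset S2)) ->
  eta_w w w1 E (S1 :|: S2) = eta_w w w1 E S1 * eta_w w w1 E S2.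
Proof.
move=> d12 hE.
rewrite !eta_uncov big_distrlr /= pair_big_dep /=.
rewrite (reindex_onto (fun M => (splitM S1 M, splitM S2 M)) (fun p => p.1 :|: p.2)) /=; last first.
  move=> [M1 M2] /= /andP[]; rewrite /matching_in => /and3P[sM1 /forall_inP c1 _] /and3P[sM2 /forall_inP c2 _].
  congr pair; apply/setP => f; rewrite !inE.
    case: (boolP (f \in M1)) => fM1 /=; first by rewrite c1 ?orbT.
    apply/negP => /andP[fM2 fS1].
    exact: (edge_nsub2 (subsetP sM2 f fM2) d12 fS1 (c2 f fM2)).
  case: (boolP (f \in M2)) => fM2 /=; first by rewrite c2 ?orbT.
  rewrite orbF; apply/negP => /andP[fM1 fS2].
  exact: (edge_nsub2 (subsetP sM1 f fM1) d12 (c1 f fM1) fS2).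
have key M : matching_in E (S1 :|: S2) M = (matching_in E S1 (splitM S1 M) &&
     matching_in E S2 (splitM S2 M) && (splitM S1 M :|: splitM S2 M == M)).
  apply/idP/idP.
    rewrite /matching_in => /and3P[sME /forall_inP cM tM].
    have eM : splitM S1 M :|: splitM S2 M = M.
      apply/setP => f; rewrite !inE.
      case: (boolP (f \in M)) => fM //=.
      exact: hE (subsetP sME f fM) (cM f fM).
    have sp A : splitM A M \subset M by apply/subsetP => f; rewrite inE => /andP[].
    rewrite eM eqxx andbT; apply/andP; split; apply/and3P; split.
    - exact: subset_trans (sp _) sME.
    - by apply/forall_inP => f; rewrite inE => /andP[].
    - exact: trivIsetS (sp _) tM.
    - exact: subset_trans (sp _) sME.
    - by apply/forall_inP => f; rewrite inE => /andP[].
    - exact: trivIsetS (sp _) tM.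
  move=> /andP[/andP[m1 m2] /eqP <-].
  move: m1 m2; move: (splitM S1 M) (splitM S2 M) => M1 M2.
  rewrite !matchingE => /and3P[sM1 c1 t1] /and3P[sM2 c2 t2].
  apply/and3P; split.
  - by rewrite subUset sM1 sM2.
  - by rewrite /cover bigcup_setU setUSS.
  - by apply: trivIsetU => //; apply: disjointWl c1 _; apply: disjointWr c2 _.
apply: eq_big => [M|M]; first exact: key.
rewrite key => /andP[/andP[m1 m2] /eqP eM]; rewrite -{1 2}eM.
move: m1 m2; move: (splitM S1 M) (splitM S2 M) => M1 M2.
rewrite !matchingE => /and3P[sM1 c1 t1] /and3P[sM2 c2 t2].
have dM : [disjoint M1 & M2].
  rewrite -setI_eq0; apply/eqP/setP => f; rewrite !inE.
  apply/negP => /andP[f1 f2].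
  apply: (edge_nsub2 (subsetP sM1 f f1) d12).
    exact: subset_trans (bigcup_sup _ f1) c1.
  exact: subset_trans (bigcup_sup _ f2) c2.
have -> : (S1 :|: S2) :\: cover (M1 :|: M2) = (S1 :\: cover M1) :|: (S2 :\: cover M2).
  rewrite /cover bigcup_setU -/(cover M1) -/(cover M2).
  apply/setP => y; rewrite !inE.
  case: (boolP (y \in S1)) => y1 /=.
    have y2 : (y \in S2) = false by rewrite (disjointFr d12 y1).
    have -> : (y \in cover M2) = false.
      by apply/negP => /(subsetP c2); rewrite y2.
    by rewrite y2; case: (y \in cover M1).
  case: (boolP (y \in cover M1)) => yc1 //=.
  by move: (subsetP c1 y yc1); rewrite (negPf y1).
rewrite /UP prodU; last first.
  apply: disjointWl (subsetDl _ _) _; apply: disjointWr (subsetDl _ _) _.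
  exact: d12.
rewrite /mw prodU' // cardsU (disjoint_setI0 dM) cards0 subn0 exprD.
rewrite -scalerAl -scalerAr !scalerA; congr (_ *: _).
by rewrite mulrACA.
Qed.


Lemma stepA (S : {set T}) (z v : T) : z \in S -> v \in S :\ z -> [set z; v] \in E ->
  \sum_(M | matching_in E S M && ([set z; v] \in M)) mw M *: UP (S :\: cover M) =
  - (sqnorm (w [set z; v]) *: eta_w w w1 E (S :\ z :\ v)).
Proof.
move=> zS vS eE; set e := [set z; v].
have ze : z \in e by rewrite !inE eqxx.
have ve : v \in e by rewrite !inE eqxx orbT.
have eS : e \subset S.
  apply/subsetP => y; rewrite !inE => /orP[/eqP->//|/eqP->]; by move: vS; rewrite inE => /andP[].
rewrite eta_uncov scaler_sumr -sumrN.
rewrite (reindex_onto (fun M => e |: M) (fun M => M :\ e)) /=; last first.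
  by move=> M /andP[_ eM]; rewrite setD1K.
have key M : matching_in E S (e |: M) && (e \in e |: M) && ((e |: M) :\ e == M) =
   matching_in E (S :\ z :\ v) M.
  rewrite setU11 andbT; apply/idP/idP.
    move=> /andP[]; rewrite !matchingE => /and3P[sME cM tM] /eqP eM.
    have neM : e \notin M by rewrite -eM !inE eqxx.
    have sM : M \subset e |: M by apply/subsetP => f fM; rewrite !inE fM orbT.
    apply/and3P; split.
    - exact: subset_trans sM sME.
    - apply/bigcupsP => f fM.
      have fe : f != e by apply: contraNneq neM => <-.
      have dfe : [disjoint f & e].
        move/trivIsetP: tM => /(_ f e) H; apply: H => //.
          exact: (subsetP sM).
        by rewrite !inE eqxx.
      apply/subsetP => y yf; rewrite !inE.
      have yS : y \in S.
        apply: (subsetP cM); apply/bigcupP; exists f => //; exact: (subsetP sM).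
      rewrite yS andbT.
      apply/andP; split; apply: contraNneq (negbT (disjointFr dfe yf)) => ->;
        by rewrite !inE eqxx ?orbT.
    - exact: trivIsetS sM tM.
  rewrite !matchingE => /and3P[sME cM tM].
  have neM : e \notin M.
    apply/negP => eM.
    have : z \in cover M by apply/bigcupP; exists e.
    by move/(subsetP cM); rewrite !inE eqxx /= andbF.
  rewrite setU1K // eqxx andbT.
  have dM : {in M, forall B : {set T}, [disjoint e & B]}.
    move=> B BM; rewrite disjoint_sym; apply: (disjointWl (bigcup_sup _ BM)).
    apply: disjointWl cM _; rewrite -setI_eq0; apply/eqP/setP => y; rewrite !inE.
    apply/negP => /andP[/and3P[yv yz _] /orP[/eqP yE|/eqP yE]].
      by rewrite yE eqxx in yz.
    by rewrite yE eqxx in yv.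
  have s0 : set0 \notin M.
    apply/negP => /(subsetP sME)/sE; by rewrite cards0.
  have [tU _] := trivIsetU1 dM tM s0.
  apply/and3P; split => //.
  - by rewrite subUset sub1set eE sME.
  - rewrite /cover big_setU1 //= subUset eS /=.
    apply: subset_trans cM _; apply/subsetP => y; rewrite !inE.
    by move=> /and3P[_ _ ->].
apply: eq_big => [M|M]; first exact: key.
rewrite key matchingE => /and3P[sME cM tM].
have neM : e \notin M.
  apply/negP => eM.
  have : z \in cover M by apply/bigcupP; exists e.
  by move/(subsetP cM); rewrite !inE eqxx /= andbF.
rewrite /mw cardsU1 neM big_setU1 //= exprS.
have -> : S :\: cover (e |: M) = (S :\ z :\ v) :\: cover M.
  rewrite /cover big_setU1 //=; apply/setP => y; rewrite !inE.
  by case: (y == z); case: (y == v); case: (y \in \bigcup_(B in M) B).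
rewrite -scaleNr scalerA; congr (_ *: _).
by rewrite mulN1r !mulNr mulrCA.
Qed.


Lemma eta_rec (S : {set T}) (z : T) : z \in S ->
  eta_w w w1 E S = ('X - (w1 z)%:P) * eta_w w w1 E (S :\ z) -
    \sum_(v in S :\ z | [set z; v] \in E)
        sqnorm (w [set z; v]) *: eta_w w w1 E (S :\ z :\ v).
Proof.
move=> zS.
rewrite [in LHS]eta_uncov (bigID (fun M => z \in cover M)) /= addrC.
congr (_ + _).
  rewrite eta_uncov mulr_sumr; apply: eq_big => [M|M].
    by rewrite !matchingE subsetD1; case: (M \subset E); case: (cover M \subset S);
      case: (z \in cover M); case: (trivIset M).
  move=> /andP[_ nz]; rewrite -scalerAr; congr (_ *: _).
  rewrite /UP (big_setD1 z) /=; last by rewrite !inE nz.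
  congr (_ * _); apply: eq_bigl => y; rewrite !inE.
  by case: (y == z); case: (y \in S); case: (y \in cover M).
rewrite -sumrN; symmetry.
rewrite [LHS](eq_bigr (fun v => \sum_(M | matching_in E S M && ([set z; v] \in M))
   mw M *: UP (S :\: cover M))); last first.
  by move=> v /andP[vS eE]; rewrite (stepA zS vS eE).
rewrite (exchange_big_dep (fun M => matching_in E S M && (z \in cover M))) /=; last first.
  move=> v M _ /andP[-> eM]; apply/bigcupP; exists [set z; v] => //.
  by rewrite !inE eqxx.
apply: eq_bigr => M /andP[mM zc].
move: (mM); rewrite matchingE => /and3P[sME cM tM].
have [f fM zf] := bigcupP zc.
have [x [y [xy fxy]]] := cards2P _ (introT eqP (sE (subsetP sME f fM))).
have [v0 [nzv ef]] : exists v0, z != v0 /\ f = [set z; v0].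
  move: zf; rewrite fxy !inE => /orP[/eqP zx|/eqP zy].
    by exists y; rewrite zx.
  by exists x; rewrite zy eq_sym setUC.
rewrite (big_pred1 v0) // => v /=.
rewrite sME cM tM /=.
apply/idP/idP.
  move=> /andP[/andP[vS eE] eM].
  have : [set z; v] = f.
    apply/eqP; apply: contraT => ne.
    move/trivIsetP: tM => /(_ _ _ eM fM ne).
    by move/disjointFr => /(_ z); rewrite !inE eqxx /= => /(_ isT); rewrite zf.
  rewrite ef => /setP /(_ v); rewrite !inE eqxx orbT => /esym /orP[/eqP vz|//].
  by move: vS; rewrite vz !inE eqxx.
move=> /eqP ->; rewrite -ef fM andbT.
rewrite (subsetP sME f fM) andbT !inE eq_sym nzv /=.
apply: (subsetP cM); apply/bigcupP; exists f => //; rewrite ef !inE eqxx orbT.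
all: by [].
Qed.

End Gen.

Section Tree.
Variables (R : rcfType) (V : finType) (E : {set {set V}})
  (w : {set V} -> R[i]) (w1 : V -> R) (u : V).
Hypothesis sE : simple_graph E.

Local Notation VT := (ptree_vertex E u).
Local Notation TE := (ptree_edges E u).
Local Notation etaG S := (eta_w w w1 E S).
Local Notation etaT S := (eta_w (ptree_w E u w) (ptree_w1 E u w1) (ptree_edges E u) S).

Lemma upathsP p : (p \in upaths E u) = is_upath E u p.
Proof.
apply/idP/idP; last exact: upaths_complete.
by rewrite mem_undup mem_filter => /andP[].
Qed.

Lemma vT_path (q : VT) : is_upath E u (val q).
Proof. by rewrite -upathsP; exact: (valP q). Qed.

Definition ch (p q : VT) := val q == rcons (val p) (endpt E u q).

Lemma ch_size p q : ch p q -> size (val q) = (size (val p)).+1.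
Proof. by move/eqP ->; rewrite size_rcons. Qed.

Lemma ch_irr p : ~~ ch p p.
Proof. by apply/negP => /ch_size /eqP; rewrite -addn1 -{1}(addn0 (size _)) eqn_add2l. Qed.

Lemma TE_ch f : f \in TE -> exists p q, f = [set p; q] /\ ch p q.
Proof.
rewrite inE => /existsP[p /existsP[q /andP[/eqP -> h]]].
by exists p, q.
Qed.

Lemma ch_TE p q : ch p q -> [set p; q] \in TE.
Proof. by move=> h; rewrite inE; apply/existsP; exists p; apply/existsP; exists q; rewrite eqxx. Qed.

Lemma ch_neq p q : ch p q -> p != q.
Proof. by move=> h; apply: contraNneq (ch_irr p) => e; rewrite {2}e. Qed.

Lemma sTE : simple_graph TE.
Proof.
move=> f /TE_ch[p [q [-> h]]]; by rewrite cards2 ch_neq.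
Qed.

Lemma TE_set2 p q : ([set p; q] \in TE) = ch p q || ch q p.
Proof.
apply/idP/idP; last first.
  by case/orP => h; [exact: ch_TE | rewrite setUC; exact: ch_TE].
move=> /TE_ch[p' [q' [e h]]].
have pq' := ch_neq h.
have : p' \in [set p; q] by rewrite e !inE eqxx.
have : q' \in [set p; q] by rewrite e !inE eqxx orbT.
rewrite !inE => /orP[/eqP eq|/eqP eq] /orP[/eqP ep|/eqP ep];
  by move: pq' h; rewrite eq ep ?eqxx // => _ ->; rewrite ?orbT.
Qed.


Definition Dn (p : VT) : {set VT} := [set q : VT | prefix (val p) (val q)].

Lemma Dn_refl p : p \in Dn p.
Proof. by rewrite inE prefix_refl. Qed.

Lemma prefix_size (s t : seq V) : prefix s t -> (size s <= size t)%N.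
Proof. by move/prefixP => [r ->]; rewrite size_cat leq_addr. Qed.

Lemma Dn_size p q : q \in Dn p -> q != p -> (size (val p) < size (val q))%N.
Proof.
rewrite inE => /prefixP[r e] nqp.
case: r e => [|x r] e.
  by move: e; rewrite cats0 => /val_inj eq; rewrite eq eqxx in nqp.
by rewrite e size_cat /= addnS ltnS leq_addr.
Qed.

Lemma prefix_cmp (c a b : seq V) : prefix c b -> prefix a b ->
  (size c <= size a)%N -> prefix c a.
Proof.
rewrite !prefixE => /eqP hc /eqP ha sca.
by rewrite -ha take_takel // hc eqxx.
Qed.

Lemma ch_prefix p q : ch p q -> prefix (val p) (val q).
Proof. by move/eqP ->; exact: prefix_rcons. Qed.

Lemma ch_Dn p c : ch p c -> Dn c \subset Dn p :\ p.
Proof.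
move=> h; apply/subsetP => q; rewrite !inE => hq.
rewrite (prefix_trans (ch_prefix h) hq) andbT.
apply/eqP => eqp; move: (prefix_size hq); rewrite eqp (ch_size h).
by rewrite ltnn.
Qed.

Lemma cross p c a b : ch p c -> ch a b -> a \in Dn p -> a != p ->
  (a \in Dn c) = (b \in Dn c).
Proof.
move=> hc hab aD nap.
have sa := Dn_size aD nap.
rewrite !inE; apply/idP/idP => h.
  exact: prefix_trans h (ch_prefix hab).
apply: prefix_cmp h (ch_prefix hab) _.
by rewrite (ch_size hc).
Qed.




Lemma split_gen p c (X : {set VT}) : ch p c -> X \subset Dn c ->
  etaT (X :|: ((Dn p :\ p) :\: Dn c)) = etaT X * etaT ((Dn p :\ p) :\: Dn c).
Proof.
move=> hc sX; apply: (eta_mul _ _ sTE).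
  rewrite -setI_eq0; apply/eqP/setP => q; rewrite !inE.
  apply/negP => /andP[/(subsetP sX)]; rewrite inE => qc /and3P[/negP].
  by rewrite qc.
move=> f /TE_ch[a [b [-> hab]]].
rewrite !subUset !sub1set => /andP[aXY bXY].
have [aDp nap] : a \in Dn p /\ a != p.
  have : a \in Dn p :\ p.
    move: aXY; rewrite inE => /orP[/(subsetP sX)/(subsetP (ch_Dn hc)) //|].
    by rewrite inE => /andP[_ ->].
  by move/setD1P => [h1 h2]; split.
have cr := cross hc hab aDp nap.
case: (boolP (a \in Dn c)) => ac.
  have bc : b \in Dn c by rewrite -cr.
  move: aXY bXY; rewrite !in_setU !in_setD ac bc /= !orbF => -> ->; by [].
have bc : b \notin Dn c by rewrite -cr.
have nX (x : VT) : x \notin Dn c -> x \in X = false.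
  by move=> xc; apply/negP => /(subsetP sX); rewrite (negPf xc).
move: aXY bXY; rewrite !in_setU !in_setD (negPf ac) (negPf bc) !nX //= => -> ->.
by [].
Qed.


Definition Qd p c := (Dn p :\ p) :\: Dn c.

Lemma D1 p c : ch p c -> etaT (Dn p :\ p) = etaT (Dn c) * etaT (Qd p c).
Proof.
move=> hc; rewrite -(split_gen hc (subxx _)); congr (eta_w _ _ _ _).
apply/setP => q; rewrite /Qd in_setU !in_setD.
case: (boolP (q \in Dn c)) => qc //=.
by move: (subsetP (ch_Dn hc) _ qc); rewrite in_setD.
Qed.

Lemma D2 p c : ch p c -> etaT (Dn p :\ p :\ c) = etaT (Dn c :\ c) * etaT (Qd p c).
Proof.
move=> hc; rewrite -(split_gen hc (subD1set _ _)); congr (eta_w _ _ _ _).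
apply/setP => q; rewrite /Qd in_setU !in_setD !in_set1.
case: (boolP (q \in Dn c)) => qc /=.
  move: (subsetP (ch_Dn hc) _ qc); rewrite in_setD in_set1 => /andP[-> ->].
  by rewrite andbT orbF.
have -> : q != c by apply: contraNneq qc => ->; exact: Dn_refl.
by rewrite andbF.
Qed.

Lemma trec p : etaT (Dn p) = ('X - (w1 (endpt E u p))%:P) * etaT (Dn p :\ p) -
  \sum_(q | ch p q) sqnorm (ptree_w E u w [set p; q]) *: etaT (Dn p :\ p :\ q).
Proof.
rewrite (eta_rec _ _ sTE (Dn_refl p)); congr (_ * _ - _).
apply: eq_bigl => q; rewrite TE_set2.
apply/idP/idP.
  move=> /andP[qD /orP[//|hq]].
  move: qD => /setD1P[nqp qD].
  have := Dn_size qD nqp; rewrite (ch_size hq) ltnNge leqnSn //.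
move=> hq; rewrite hq (subsetP (ch_Dn hq) _ (Dn_refl q)) //.
Qed.


Definition chl (p : VT) (v : V) : VT := insubd p (rcons (val p) v).

Lemma upath_rcons (p : VT) v :
  is_upath E u (rcons (val p) v) = (v \notin val p) && adj E (endpt E u p) v.
Proof.
have := vT_path p; rewrite /endpt.
case: (val p) => [//|x s] /and3P[xu pth uq].
rewrite /is_upath /= xu rcons_path pth /=.
have us : uniq s by case/andP: uq.
have xs : x \notin s by case/andP: uq.
rewrite mem_rcons rcons_uniq !in_cons (negPf xs) us eq_sym.
by case: (v == x); case: (v \in s); case: (adj E (last x s) v).
Qed.

Lemma endpt_mem (p : VT) : endpt E u p \in val p.
Proof.
have := vT_path p; rewrite /endpt; case: (val p) => [//|x s] _.
exact: (mem_last x s).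
Qed.

Lemma chl_val p v : is_upath E u (rcons (val p) v) -> val (chl p v) = rcons (val p) v.
Proof. by move=> h; rewrite /chl insubdK // upathsP. Qed.

Lemma reindex_children p (F : VT -> {poly R}) :
  \sum_(q | ch p q) F q =
  \sum_(v | (v \notin val p) && adj E (endpt E u p) v) F (chl p v).
Proof.
rewrite (reindex_onto (chl p) (endpt E u)) /=; last first.
  move=> q hq; apply: val_inj; rewrite /chl insubdK -(eqP hq) //.
  exact: (valP q).
apply: eq_bigl => v; rewrite -upath_rcons.
case: (boolP (is_upath E u (rcons (val p) v))) => h.
  by rewrite /ch /endpt chl_val // last_rcons !eqxx.
rewrite /chl /insubd insubN /=; first by rewrite (negPf (ch_irr p)).
by rewrite upathsP.
Qed.

Definition Cl (p : VT) := etaG (~: [set x in val p]) * etaT (Dn p) =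
  etaT (Dn p :\ p) * etaG (endpt E u p |: ~: [set x in val p]).

Lemma step p : (forall c, ch p c -> Cl c) -> Cl p.
Proof.
move=> IH; rewrite /Cl.
set z := endpt E u p; set P := [set x in val p].
have zP : z \in P by rewrite inE endpt_mem.
rewrite [etaG (z |: _)](eta_rec _ _ sE (setU11 z _)).
rewrite setU1K; last by rewrite inE zP.
rewrite trec -/z reindex_children -/z.
rewrite [in RHS](eq_bigl (fun v => (v \notin val p) && adj E z v)); last first.
  by move=> v; rewrite inE inE.
set b := etaG (~: P); set B := etaT (Dn p :\ p).
rewrite !mulrBr [b * (\sum_(_ | _) _)]mulr_sumr [B * (\sum_(_ | _) _)]mulr_sumr.
congr (_ - _).
  by rewrite mulrCA [in RHS]mulrCA [b * B]mulrC.
apply: eq_bigr => v hv.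
have hcv : val (chl p v) = rcons (val p) v by rewrite chl_val // upath_rcons.
have hc : ch p (chl p v) by rewrite /ch /endpt hcv last_rcons eqxx.
have ew : ptree_w E u w [set p; chl p v] = w [set z; v].
  by rewrite /ptree_w imsetU1 imset_set1 {2}/endpt hcv last_rcons.
rewrite ew -!scalerAr; congr (_ *: _).
have := IH _ hc; rewrite /Cl.
have -> : endpt E u (chl p v) = v by rewrite /endpt hcv last_rcons.
have eP : ~: [set x in val (chl p v)] = ~: P :\ v.
  by apply/setP => x; rewrite hcv !inE mem_rcons inE negb_or.
have vP : v \in ~: P by case/andP: hv => hv _; rewrite inE inE.
rewrite eP setD1K // => IHc.
rewrite (D2 hc) /B (D1 hc).
by rewrite mulrA [b * _]mulrC -IHc -mulrA mulrC.
Qed.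


Lemma size_le (q : VT) : (size (val q) <= #|V|)%N.
Proof.
have := vT_path q; case: (val q) => [//|x s] /and3P[_ _ Hu].
by rewrite -(card_uniqP Hu) max_card.
Qed.

Lemma claim_all p : Cl p.
Proof.
suff H : forall n (p : VT), (#|V| - size (val p) < n)%N -> Cl p.
  exact: (H (#|V| - size (val p)).+1 p (ltnSn _)).
elim=> [//|n IH] q hq; apply: step => c hc; apply: IH.
have sc := ch_size hc; have := size_le c.
lia.
Qed.

End Tree.

Theorem theorem3p1 (R : rcfType) (V : finType) (E : {set {set V}})
    (w : {set V} -> R[i]) (w1 : V -> R) (u : V) :
  simple_graph E ->
  (forall f, f \in E -> w f != 0) ->
  eta_w w w1 E [set~ u] *
    eta_w (ptree_w E u w) (ptree_w1 E u w1) (ptree_edges E u) setT =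
  eta_w (ptree_w E u w) (ptree_w1 E u w1) (ptree_edges E u) (ptree_minus_root E u) *
    eta_w w w1 E setT.
Proof.
move=> sE _.
have hu : [:: u] \in upaths E u by rewrite upathsP /is_upath /= eqxx.
pose p0 : ptree_vertex E u := Sub [:: u] hu.
have := claim_all w w1 sE p0; rewrite /Cl.
have e1 : [set x in val p0] = [set u] by apply/setP => x; rewrite !inE.
have e2 : endpt E u p0 = u by [].
have e3 : Dn p0 = setT.
  apply/setP => -[s hs]; rewrite !inE prefixE /=.
  move: hs; rewrite upathsP; case: s => [//|x s] /and3P[/eqP -> _ _] /=.
  apply/eqP; congr (_ :: _); by case: s.
have e4 : ptree_minus_root E u = setT :\ p0.
  apply/setP => q; rewrite !inE andbT.
  by rewrite -(inj_eq val_inj).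
by rewrite e1 e2 e3 e4 setUCr.
Qed.
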